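(* Let $C>4$ be a constant. Then every Nash equilibrium graph $G$ of the sum network creation game with $n$ players and $\alpha<n/C$ is $(5,\epsilon)$-distance-almost-uniform for $\epsilon=\frac45\left(1+\frac1C\right)$.
   Context: Sum network creation game: players $V=\{1,\dots,n\}$, parameter $\alpha>0$; a strategy of $u$ is $s_u\subseteq V\setminus\{u\}$; $G_s$ has an edge $uv$ whenever $v\in s_u$ or $u\in s_v$; the cost of $u$ is $\alpha|s_u|+\sum_{v\ne u}d_{G_s}(u,v)$. A Nash equilibrium graph is $G_s$ for $s$ from which no player can strictly lower his cost unilaterally. For a graph $G$ on $n$ vertices and $v\in V(G)$, $A_s(v)$ is the set of vertices at distance exactly $s$ from $v$. $G$ is $(k,\epsilon)$-distance-almost-uniform if there exists $r$ such that $\max_{i=0}^{k-1}|A_{r+i}(u)|\ge n(1-\epsilon)$ for all $u\in V(G)$. *)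

(* Defs.v *)
From mathcomp Require Import all_boot all_order all_algebra.
From mathcomp Require Import reals.
Set Implicit Arguments. Unset Strict Implicit. Unset Printing Implicit Defensive.
Import Order.TTheory GRing.Theory Num.Theory.
Local Open Scope ring_scope.

(* Players are 'I_n (standing for {1,...,n}).  A strategy profile assigns to
   every player u a set s u of players (u must not belong to s u). *)
Definition profile (n : nat) := 'I_n -> {set 'I_n}.

Definition valid_profile n (s : profile n) : Prop := forall u, u \notin s u.

Definition Gs n (s : profile n) : rel 'I_n :=
  fun u v => (v \in s u) || (u \in s v).

Fixpoint ball n (e : rel 'I_n) (k : nat) (u : 'I_n) : {set 'I_n} :=
  match k with
  | 0 => [set u]
  | k'.+1 => ball e k' u :|: [set v | [exists w in ball e k' u, e w v]]
  end.

(* Graph distance: Some d (the least d with v in the ball of radius d),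
   or None (= infinity) if v is not reachable from u.  Radii < n suffice. *)
Definition gdist n (e : rel 'I_n) (u v : 'I_n) : option nat :=
  let k := find (fun k => v \in ball e k u) (iota 0 n) in
  if (k < n)%N then Some k else None.

Definition Aset n (e : rel 'I_n) (k : nat) (u : 'I_n) : {set 'I_n} :=
  [set v | gdist e u v == Some k].

(* Cost of player u: alpha |s_u| + sum_{v <> u} d(u,v);
   None encodes +infinity (some player unreachable). *)
Definition cost (R : realType) n (alpha : R) (s : profile n) (u : 'I_n)
  : option R :=
  if [forall v, gdist (Gs s) u v != None] then
    Some (alpha * #|s u|%:R +
          \sum_(v < n | v != u) (odflt 0%N (gdist (Gs s) u v))%:R)
  else None.

Definition strictly_lower (R : realType) (c' c : option R) : bool :=
  match c', c with
  | Some a, Some b => a < b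
  | Some _, None => true
  | None, _ => false
  end.

Definition deviate n (s : profile n) (u : 'I_n) (t : {set 'I_n}) : profile n :=
  fun w => if w == u then t else s w.

Definition nash_eq (R : realType) n (alpha : R) (s : profile n) : Prop :=
  forall (u : 'I_n) (t : {set 'I_n}), u \notin t ->
    ~~ strictly_lower (cost alpha (deviate s u t) u) (cost alpha s u).

Definition dist_almost_uniform (R : realType) n (e : rel 'I_n) (k : nat)
  (eps : R) : Prop :=
  exists r : nat, forall u : 'I_n,
    n%:R * (1 - eps) <= (\max_(i < k) #|Aset e (r + i) u|)%N%:R.

(* Main.v *)
Require Import Defs.
From mathcomp Require Import all_boot all_order all_algebra.
From mathcomp Require Import reals.
From mathcomp Require Import zify ring lra.
Import Order.TTheory GRing.Theory Num.Theory.
Set Implicit Arguments. Unset Strict Implicit. Unset Printing Implicit Defensive.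

Section Balls.
Variable n : nat.
Implicit Types (e : rel 'I_n) (u v w x : 'I_n).

Lemma ball0 e u : u \in ball e 0 u.
Proof. by rewrite /= inE. Qed.

Lemma ballS e k u : ball e k u \subset ball e k.+1 u.
Proof. by rewrite /= subsetUl. Qed.

Lemma ball_trans e a b u w x :
  w \in ball e a u -> x \in ball e b w -> x \in ball e (a + b) u.
Proof.
move=> hw; elim: b x => [|b IH] x /=.
  by rewrite inE addn0 => /eqP ->.
rewrite addnS /= inE => /orP [/IH h|].
  by rewrite inE h.
rewrite inE => /existsP [y /andP [hy hyx]].
by rewrite !inE; apply/orP; right; apply/existsP; exists y; rewrite IH.
Qed.

Lemma ball1 e u v : e u v -> v \in ball e 1 u.
Proof.
move=> h /=; rewrite !inE; apply/orP; right; apply/existsP; exists u.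
by rewrite inE eqxx.
Qed.

Lemma ball_sym e (esym : symmetric e) k u v :
  v \in ball e k u -> u \in ball e k v.
Proof.
elim: k v => [|k IH] v /=.
  by rewrite !inE eq_sym.
rewrite !inE => /orP [/IH -> //|/existsP [w /andP [hw hwv]]].
have := ball_trans (ball1 (e:=e) (u:=v) (v:=w) _) (IH _ hw).
rewrite esym => /(_ hwv); rewrite add1n /= inE => /orP [h|h].
  by rewrite h.
by rewrite inE in h; rewrite h orbT.
Qed.

Lemma ball_sub e e' (H : forall a b, e a b -> e' a b) k u :
  ball e k u \subset ball e' k u.
Proof.
elim: k => [|k IH] //=.
apply/subsetP => x; rewrite !inE => /orP [h|/existsP [y /andP [hy hyx]]].
  by rewrite (subsetP IH _ h).
apply/orP; right; apply/existsP; exists y; rewrite (subsetP IH _ hy).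
exact: H.
Qed.

Lemma gdist_le e u v k : (k < n)%N -> v \in ball e k u ->
  exists2 j, gdist e u v = Some j & (j <= k)%N.
Proof.
move=> hk hv; rewrite /gdist.
set p := (fun k => v \in ball e k u).
have hkf : (find p (iota 0 n) <= k)%N.
  rewrite leqNgt; apply/negP => /(before_find 0%N).
  by rewrite nth_iota // add0n /p hv.
have -> : (find p (iota 0 n) < n)%N by apply: leq_ltn_trans hkf hk.
by exists (find p (iota 0 n)).
Qed.

Lemma gdist_ball e u v j : gdist e u v = Some j -> v \in ball e j u /\ (j < n)%N.
Proof.
rewrite /gdist.
set p := (fun k => v \in ball e k u).
case: ifP => // hlt [<-]; split => //.
have : has p (iota 0 n) by rewrite has_find size_iota.
move=> /(nth_find 0%N); rewrite nth_iota //.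
Qed.

Lemma gdist_sym e (esym : symmetric e) u v : gdist e u v = gdist e v u.
Proof.
rewrite /gdist (@eq_find _ (fun k => v \in ball e k u) (fun k => u \in ball e k v)) //.
by move=> k; apply/idP/idP; apply: ball_sym.
Qed.

End Balls.
Local Open Scope ring_scope.

Section Main.
Variables (R : realType) (n : nat) (alpha : R) (s : profile n).
Hypotheses (hs : valid_profile s) (hNE : nash_eq alpha s) (halpha : 0 < alpha).

Lemma Gs_sym (s' : profile n) : symmetric (Gs s').
Proof. by move=> a b; rewrite /Gs orbC. Qed.

Lemma cost_some (s' : profile n) u :
  (forall v, gdist (Gs s') u v != None) ->
  cost alpha s' u = Some (alpha * #|s' u|%:R +
          \sum_(v < n | v != u) (odflt 0%N (gdist (Gs s') u v))%:R).
Proof.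
move=> H; rewrite /cost.
by have -> : [forall v, gdist (Gs s') u v != None] by apply/forallP.
Qed.

Lemma conn u v : gdist (Gs s) u v != None.
Proof.
apply/negP => /eqP hN.
have hc : cost alpha s u = None.
  rewrite /cost; case: forallP => // /(_ v); by rewrite hN.
set t := ~: [set u].
have hu : u \notin t by rewrite !inE eqxx.
have := hNE hu; rewrite hc.
rewrite (cost_some (s' := deviate s u t)) //.
move=> w; case: (eqVneq w u) => [->|hwu].
  have [j -> _] := gdist_le (e := Gs (deviate s u t)) (leq_ltn_trans (leq0n u) (ltn_ord u)) (ball0 _ u).
  by [].
have h1 : (1 < n)%N.
  have := ltn_ord u; have := ltn_ord w; move: hwu; rewrite -val_eqE /=; lia.
have he : Gs (deviate s u t) u w by rewrite /Gs /deviate eqxx !inE hwu.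
by have [j -> _] := gdist_le h1 (ball1 he).
Qed.

Definition d u v := odflt 0%N (gdist (Gs s) u v).

Lemma dE u v : gdist (Gs s) u v = Some (d u v).
Proof. by rewrite /d; have := conn u v; case: gdist. Qed.

Lemma d_sym u v : d u v = d v u.
Proof. by rewrite /d gdist_sym //; apply: Gs_sym. Qed.

Lemma d_lt u v : (d u v < n)%N.
Proof. by have [] := gdist_ball (dE u v). Qed.

Lemma d_ball u v : v \in ball (Gs s) (d u v) u.
Proof. by have [] := gdist_ball (dE u v). Qed.

Lemma d_refl u : d u u = 0%N.
Proof.
have [j hj hj0] := gdist_le (e := Gs s) (leq_ltn_trans (leq0n u) (ltn_ord u)) (ball0 _ u).
by move: hj; rewrite dE => [[->]]; move: hj0; rewrite leqn0 => /eqP.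
Qed.

Lemma card_sum (b : pred 'I_n) : #|[set y | b y]| = (\sum_y (b y : nat))%N.
Proof.
rewrite -sum1_card big_mkcond /=; apply: eq_bigr => y _; rewrite inE.
by case: (b y).
Qed.

Lemma cardA k u : #|Aset (Gs s) k u| = (\sum_y (gdist (Gs s) u y == Some k : nat))%N.
Proof. exact: (card_sum (fun y => gdist (Gs s) u y == Some k)). Qed.

Lemma key u w : u != w ->
  #|[set x | (d w x + 2 <= d u x)%N]|%:R <= alpha.
Proof.
move=> huw.
set B := [set x | (d w x + 2 <= d u x)%N].
set t := w |: s u.
have hu : u \notin t by rewrite !inE negb_or huw hs.
set s' := deviate s u t.
have hsub : forall a, s a \subset s' a.
  move=> a; rewrite /s' /deviate; case: eqP => [->|_]; last exact: subxx.
  exact: subsetUr.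
have hG : forall a b, Gs s a b -> Gs s' a b.
  move=> a b; rewrite /Gs => /orP [h|h]; apply/orP; [left|right];
  exact: (subsetP (hsub _)).
have huw' : Gs s' u w by rewrite /Gs /s' /deviate eqxx !inE eqxx.
have hd' : forall x, exists2 j, gdist (Gs s') u x = Some j &
                          (j + (x \in B) <= d u x)%N.
  move=> x.
  have [j hj hjle] := gdist_le (d_lt u x) (subsetP (ball_sub hG _ _) _ (d_ball u x)).
  exists j => //.
  case hB: (x \in B); last by rewrite addn0.
  move: hB; rewrite inE => hB.
  have hb : x \in ball (Gs s') (1 + d w x) u.
    apply: ball_trans (ball1 huw') _.
    exact: (subsetP (ball_sub hG _ _) _ (d_ball w x)).
  have hlt : (1 + d w x < n)%N by have := d_lt u x; lia.
  have [j' hj' hj'le] := gdist_le hlt hb.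
  move: hj'; rewrite hj => [[hjj]]; lia.
have hne : forall x, gdist (Gs s') u x != None.
  by move=> x; have [j -> _] := hd' x.
have := hNE hu; rewrite -/s' (cost_some hne).
rewrite (cost_some (s' := s)); last exact: conn.
rewrite /= -leNgt.
have hst : #|s' u| = (#|s u| + (w \notin s u))%N.
  by rewrite /s' /deviate eqxx /t cardsU1 addnC.
have hsum : (\sum_(v < n | v != u) odflt 0%N (gdist (Gs s') u v) + #|B| <=
             \sum_(v < n | v != u) odflt 0%N (gdist (Gs s) u v))%N.
  have -> : #|B| = (\sum_(v < n | v != u) (v \in B : nat))%N.
    rewrite -sum1_card big_mkcond /= (bigD1 u) //= big_mkcond /=.
    have -> : (u \in B) = false by rewrite inE d_refl; lia.
    rewrite add0n; apply: eq_bigr => v _.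
    by case: (v \in B); case: (v != u).
  rewrite -big_split /=; apply: leq_sum => v _.
  by have [j -> hj] := hd' v; rewrite dE.
move=> hle.
move: hsum; rewrite -(ler_nat R) natrD !natr_sum => hsum.
move: hle; rewrite hst natrD mulrDr.
have : ((w \notin s u : nat)%:R : R) <= 1 by case: (w \notin s u); rewrite /= ?lexx ?ler01.
move=> hb hle2.
have hab : alpha * (w \notin s u)%:R <= alpha * 1 by apply: ler_wpM2l => //; exact: ltW.
rewrite mulr1 in hab; lra.
Qed.


Definition P2 u w x := ((d w x + 2 <= d u x) || (d u x + 2 <= d w x))%N.

Lemma key2 u w : #|[set x | P2 u w x]|%:R <= 2 * alpha.
Proof.
case: (eqVneq u w) => [->|huw].
  have -> : [set x | P2 w w x] = set0.
    by apply/setP => x; rewrite !inE /P2; lia.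
  rewrite cards0 mulr0n; apply: mulr_ge0 => //; exact: ltW.
have -> : [set x | P2 u w x] =
   [set x | (d w x + 2 <= d u x)%N] :|: [set x | (d u x + 2 <= d w x)%N].
  by apply/setP => x; rewrite !inE.
apply: le_trans (_ : (#|[set x | (d w x + 2 <= d u x)%N]| +
                      #|[set x | (d u x + 2 <= d w x)%N]|)%:R <= _).
  by rewrite ler_nat; apply: leq_card_setU.
rewrite natrD mulr2n mulrDl mul1r; apply: lerD; apply: key => //.
by rewrite eq_sym.
Qed.

Lemma exists_center (x0 : 'I_n) : exists z,
  #|[set y | ((d z x0 + 2 <= d z y) || (d z y + 2 <= d z x0))%N]|%:R <= 2 * alpha.
Proof.
set Q := fun z => #|[set y | ((d z x0 + 2 <= d z y) || (d z y + 2 <= d z x0))%N]|.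
case: (arg_minnP Q (erefl true : (predT x0))) => z _ hmin.
exists z.
have hsum : (\sum_(z0 : 'I_n) Q z0)%N =
            (\sum_(y : 'I_n) #|[set z0 | P2 y x0 z0]|)%N.
  rewrite /Q; under eq_bigr => z0 _ do rewrite card_sum.
  rewrite exchange_big /=; apply: eq_bigr => y _.
  rewrite card_sum; apply: eq_bigr => z0 _.
  by rewrite /P2 (d_sym z0 x0) (d_sym z0 y) orbC.
have h1 : (n * Q z <= \sum_(z0 : 'I_n) Q z0)%N.
  rewrite -{1}(card_ord n) -sum_nat_const; apply: leq_sum => z0 _; exact: hmin.
have h2 : ((\sum_(y : 'I_n) #|[set z0 | P2 y x0 z0]|)%:R : R) <= n%:R * (2 * alpha).
  rewrite natr_sum; apply: le_trans (ler_sum _ (fun y _ => key2 y x0)) _.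
  rewrite sumr_const card_ord; by rewrite [n%:R * _]mulr_natl.
have hn : (0 < n)%N by apply: leq_ltn_trans (leq0n x0) (ltn_ord x0).
move: h1; rewrite -(ler_nat R) hsum natrM => h1.
have := le_trans h1 h2.
by rewrite ler_pM2l // ltr0n.
Qed.


Lemma final (C : R) (hC : 4 < C) (hlt : alpha < n%:R / C) :
  dist_almost_uniform (Gs s) 5 (4 / 5 * (1 + 1 / C)).
Proof.
have [x0 _|hnone] := pickP (predT : pred 'I_n); last first.
  by exists 0%N => u; have := hnone u.
have [z hz] := exists_center x0.
exists (d z x0 - 2)%N => u.
set r := (d z x0 - 2)%N.
set M := (\max_(i < 5) #|Aset (Gs s) (r + i) u|)%N.
set W := [set y | (r <= d u y <= r + 4)%N].
have hWc : ~: W \subset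
    [set y | ((d z x0 + 2 <= d z y) || (d z y + 2 <= d z x0))%N] :|: [set y | P2 u z y].
  apply/subsetP => y; rewrite !inE /P2 /r; lia.
have hc : #|~: W|%:R <= 4 * alpha.
  apply: le_trans (_ : (#|[set y | ((d z x0 + 2 <= d z y) || (d z y + 2 <= d z x0))%N]|
                  + #|[set y | P2 u z y]|)%:R <= _).
    rewrite ler_nat; apply: leq_trans (subset_leq_card hWc) _.
    exact: leq_card_setU.
  rewrite natrD; have := key2 u z; lra.
have hW : (#|W| <= \sum_(i < 5) #|Aset (Gs s) (r + i) u|)%N.
  rewrite /W card_sum.
  rewrite (eq_bigr _ (fun (i : 'I_5) _ => cardA (r + i) u)).
  rewrite exchange_big /=; apply: leq_sum => y _.
  rewrite dE !big_ord_recr big_ord0 /= !(inj_eq (@Some_inj _)).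
  lia.
have hM : (\sum_(i < 5) #|Aset (Gs s) (r + i) u| <= 5 * M)%N.
  apply: (@leq_trans (\sum_(i < 5) M)%N).
    apply: leq_sum => i _.
    by rewrite /M (bigD1 i) //= leq_maxl.
  by rewrite sum_nat_const card_ord.
have hn := cardsC W; rewrite card_ord in hn.
have h5 : (n <= 5 * M + #|~: W|)%N by lia.
move: h5; rewrite -(ler_nat R) natrD natrM => h5.
have hC0 : 0 < C by lra.
have -> : n%:R * (1 - 4 / 5 * (1 + 1 / C)) = n%:R / 5 - 4 / 5 * (n%:R / C).
  by field; rewrite gt_eqF.
lra.
Qed.

End Main.

Theorem proposition9 (R : realType) (C : R) (hC : 4 < C)
  (n : nat) (alpha : R) (halpha : 0 < alpha) (hlt : alpha < n%:R / C)
  (s : profile n) (hs : valid_profile s) (hNE : nash_eq alpha s) :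
  dist_almost_uniform (Gs s) 5 (4 / 5 * (1 + 1 / C)).
Proof. exact: (final hs hNE halpha hC hlt). Qed.
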